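(* Let $r\ge2$ be an integer, $c>0$ and $f\in\mathcal{P}_c$. Then for every $n\in\mathbb{N}_0$, $$H_tf(x)=\min_{k\in\{0,1,\dots,r^n\}}q_f\Big(t,x;\frac{k}{r^n}\Big)\quad\text{for all }(t,x)\in\Big[\frac{1}{2cr^n},\infty\Big)\times[0,1].$$
   Context: $C_p(\mathbb{R})$ denotes the set of all continuous functions $f:\mathbb{R}\to\mathbb{R}$ periodic with period $1$ with $f(0)=0$; $\mathbb{N}_0=\mathbb{N}\cup\{0\}$. For such $f$, $q_f(t,x;z)=f(z)+\frac{1}{2t}(x-z)^2$ and $H_tf(x)=\inf_{z\in\mathbb{R}}q_f(t,x;z)$ for $t>0$, $x\in\mathbb{R}$. For $(n,k,y)\in\mathbb{N}_0\times\mathbb{Z}\times(0,1)$: $\delta^+_{n,k}(y;f)=\dfrac{f(\frac{k+1}{r^n})-f(\frac{k+y}{r^n})}{\frac{1-y}{r^n}}$, $\delta^-_{n,k}(y;f)=\dfrac{f(\frac{k+y}{r^n})-f(\frac{k}{r^n})}{\frac{y}{r^n}}$. $\mathcal{P}_c$ is the set of $f\in C_p(\mathbb{R})$ with $\delta^+_{n,k}(y;f)-\delta^-_{n,k}(y;f)\le-c$ for all $(n,k,y)\in\mathbb{N}_0\times\mathbb{Z}\times(0,1)$. *)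

(* Defs.v *)
From Stdlib Require Import Reals List.
From Coquelicot Require Import Coquelicot.
Open Scope R_scope.

Definition Cp (f : R -> R) : Prop :=
  (forall x, continuity_pt f x) /\ (forall x, f (x + 1) = f x) /\ f 0 = 0.

Definition qf (f : R -> R) (t x z : R) : R := f z + (x - z) ^ 2 / (2 * t).

Definition Ht (f : R -> R) (t x : R) : Rbar :=
  Glb_Rbar (fun y => exists z : R, y = qf f t x z).

Definition delta_plus (r : nat) (n : nat) (k : Z) (y : R) (f : R -> R) : R :=
  (f ((IZR k + 1) / INR r ^ n) - f ((IZR k + y) / INR r ^ n)) / ((1 - y) / INR r ^ n).

Definition delta_minus (r : nat) (n : nat) (k : Z) (y : R) (f : R -> R) : R :=
  (f ((IZR k + y) / INR r ^ n) - f (IZR k / INR r ^ n)) / (y / INR r ^ n).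

Definition Pc (r : nat) (c : R) (f : R -> R) : Prop :=
  Cp f /\
  forall (n : nat) (k : Z) (y : R), 0 < y < 1 ->
    delta_plus r n k y f - delta_minus r n k y f <= - c.

Definition min_grid (f : R -> R) (r n : nat) (t x : R) : R :=
  fold_right Rmin (qf f t x 0)
    (map (fun k : nat => qf f t x (INR k / INR r ^ n)) (seq 0 (r ^ n + 1))).

(* Main.v *)
Require Import Defs.
From Stdlib Require Import Reals List Lra Lia ZArith Psatz.
From Coquelicot Require Import Coquelicot.
Open Scope R_scope.

Lemma fold_min_cases (d : R) (l : list R) :
  fold_right Rmin d l = d \/ In (fold_right Rmin d l) l.
Proof.
  induction l as [|a l IH]; simpl; [now left|].
  apply Rmin_case_strong; intros _; [right; now left|].
  destruct IH as [H|H]; [now left| right; now right].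
Qed.

Lemma fold_min_le_d (d : R) (l : list R) : fold_right Rmin d l <= d.
Proof.
  induction l as [|a l IH]; simpl; [lra|].
  eapply Rle_trans; [apply Rmin_r| exact IH].
Qed.

Lemma fold_min_le_in (d : R) (l : list R) v : In v l -> fold_right Rmin d l <= v.
Proof.
  induction l as [|a l IH]; simpl; [tauto|].
  intros [->|H]; [apply Rmin_l|].
  eapply Rle_trans; [apply Rmin_r| now apply IH].
Qed.

Lemma core (f : R -> R) (N c t x kk y : R) :
  0 < N -> 0 < c -> 1 / (2 * c * N) <= t -> 0 < y < 1 ->
  (f ((kk + 1) / N) - f ((kk + y) / N)) / ((1 - y) / N)
   - (f ((kk + y) / N) - f (kk / N)) / (y / N) <= - c ->
  Rmin (qf f t x (kk / N)) (qf f t x ((kk + 1) / N)) <= qf f t x ((kk + y) / N).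
Proof.
  intros HN Hc Ht Hy H.
  set (A := f (kk / N)) in *. set (B := f ((kk + 1) / N)) in *.
  set (P := f ((kk + y) / N)) in *.
  assert (Hpos : 0 < 1 / (2 * c * N)).
  { apply Rdiv_lt_0_compat; [lra| apply Rmult_lt_0_compat; lra]. }
  assert (Htp : 0 < t) by lra.
  assert (HP : P >= y * B + (1 - y) * A + c * y * (1 - y) / N).
  { assert (E : (B - P) / ((1 - y) / N) - (P - A) / (y / N)
               = N * (y * (B - P) - (1 - y) * (P - A)) / (y * (1 - y))).
    { field; lra. }
    rewrite E in H.
    assert (H2 : N * (y * (B - P) - (1 - y) * (P - A)) <= - c * (y * (1 - y))).
    { assert (Hyy : 0 < y * (1 - y)) by nra.
      apply (Rmult_le_compat_r (y * (1 - y))) in H; [|lra].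
      replace (N * (y * (B - P) - (1 - y) * (P - A)) / (y * (1 - y)) * (y * (1 - y)))
        with (N * (y * (B - P) - (1 - y) * (P - A))) in H by (field; lra).
      lra. }
    assert (H3 : y * (B - P) - (1 - y) * (P - A) <= - c * (y * (1 - y)) / N).
    { apply (Rmult_le_reg_l N); [lra|].
      replace (N * (- c * (y * (1 - y)) / N)) with (- c * (y * (1 - y))) by (field; lra).
      exact H2. }
    replace (c * y * (1 - y) / N) with (- (- c * (y * (1 - y)) / N)) by (field; lra).
    lra. }
  assert (Hs : 1 / (2 * t) <= c * N).
  { assert (Ht2 : 1 <= 2 * c * N * t).
    { apply (Rmult_le_compat_l (2 * c * N)) in Ht; [|nra].
      replace (2 * c * N * (1 / (2 * c * N))) with 1 in Ht by (field; lra). lra. }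
    apply (Rmult_le_reg_l (2 * t)); [lra|].
    replace (2 * t * (1 / (2 * t))) with 1 by (field; lra). nra. }
  unfold qf. fold A B P.
  set (s := 1 / (2 * t)) in *.
  assert (Es : forall u, u ^ 2 / (2 * t) = u ^ 2 * s) by (intro; unfold s; field; lra).
  rewrite !Es.
  assert (Hq : (x - (kk + y) / N) ^ 2 =
     y * (x - (kk + 1) / N) ^ 2 + (1 - y) * (x - kk / N) ^ 2 - y * (1 - y) / (N * N)).
  { field; lra. }
  rewrite Hq.
  assert (Hs0 : 0 < s) by (unfold s; apply Rdiv_lt_0_compat; lra).
  assert (Hgap : c * y * (1 - y) / N - y * (1 - y) / (N * N) * s >= 0).
  { replace (c * y * (1 - y) / N - y * (1 - y) / (N * N) * s)
      with (y * (1 - y) / (N * N) * (c * N - s)) by (field; lra).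
    assert (0 <= y * (1 - y) / (N * N)).
    { apply Rmult_le_pos; [nra| left; apply Rinv_0_lt_compat; nra]. }
    apply Rle_ge, Rmult_le_pos; lra. }
  set (qa := A + (x - kk / N) ^ 2 * s) in *.
  set (qb := B + (x - (kk + 1) / N) ^ 2 * s) in *.
  apply Rmin_case_strong; intros Hm.
  - assert (P + (y * (x - (kk + 1) / N) ^ 2 + (1 - y) * (x - kk / N) ^ 2
        - y * (1 - y) / (N * N)) * s >= y * qb + (1 - y) * qa) by (unfold qa, qb; nra).
    nra.
  - assert (P + (y * (x - (kk + 1) / N) ^ 2 + (1 - y) * (x - kk / N) ^ 2
        - y * (1 - y) / (N * N)) * s >= y * qb + (1 - y) * qa) by (unfold qa, qb; nra).
    nra.
Qed.

Lemma per_nat f : Cp f -> forall n x, f (x + INR n) = f x.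
Proof.
  intros [_ [Hp _]] n; induction n as [|n IH]; intro x.
  - simpl; now rewrite Rplus_0_r.
  - rewrite S_INR, <- (IH x), <- (Hp (x + INR n)); f_equal; lra.
Qed.

Lemma f_int f : Cp f -> forall m : Z, f (IZR m) = 0.
Proof.
  intros HC m. destruct HC as [H1 [H2 H0]].
  assert (HC : Cp f) by (repeat split; auto).
  destruct (Z_le_gt_dec 0 m) as [Hm|Hm].
  - rewrite <- (Z2Nat.id m Hm), <- INR_IZR_INZ.
    rewrite <- (Rplus_0_l (INR _)), per_nat; auto.
  - assert (E : m = (- Z.of_nat (Z.to_nat (- m)))%Z) by lia.
    rewrite E, opp_IZR, <- INR_IZR_INZ.
    rewrite <- H0. rewrite <- (per_nat f HC (Z.to_nat (- m)) (- _)).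
    f_equal; lra.
Qed.

Lemma f_nonneg r c f : 0 < c -> Pc r c f -> forall z, 0 <= f z.
Proof.
  intros Hc [HC HP] z.
  destruct (base_Int_part z) as [B1 B2].
  set (k := Int_part z) in *.
  set (y := z - IZR k).
  destruct (Rle_lt_dec y 0) as [Hy0|Hy0].
  - replace z with (IZR k) by (unfold y in Hy0; lra). rewrite f_int; auto; lra.
  - assert (Hy : 0 < y < 1) by (unfold y in *; lra).
    specialize (HP 0%nat k y Hy).
    unfold delta_plus, delta_minus in HP. simpl pow in HP.
    rewrite !Rdiv_1_r in HP.
    replace (IZR k + 1) with (IZR (k + 1)) in HP by (rewrite plus_IZR; lra).
    rewrite !(f_int f HC) in HP.
    replace (IZR k + y) with z in HP by (unfold y in *; lra).
    destruct (Rle_lt_dec 0 (f z)) as [H|H]; auto.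
    exfalso.
    assert (E : (0 - f z) / (1 - y) - (f z - 0) / y = - f z * (1 / (1 - y) + 1 / y))
      by (field; lra).
    rewrite E in HP.
    assert (0 < 1 / (1 - y)) by (apply Rdiv_lt_0_compat; lra).
    assert (0 < 1 / y) by (apply Rdiv_lt_0_compat; lra).
    nra.
Qed.

Theorem theorem4p2 (r : nat) (c : R) (f : R -> R) :
  (2 <= r)%nat -> 0 < c -> Pc r c f ->
  forall (n : nat) (t x : R),
    1 / (2 * c * INR r ^ n) <= t -> 0 <= x <= 1 ->
    Ht f t x = Finite (min_grid f r n t x).
Proof.
  intros Hr Hc HPc n t x Ht Hx.
  assert (Hnn := f_nonneg r c f Hc HPc).
  destruct HPc as [HC HP].
  assert (f0 : f 0 = 0) by (destruct HC as [_ [_ H]]; exact H).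
  assert (f1 : f 1 = 0).
  { destruct HC as [_ [H _]]. rewrite <- f0, <- (H 0). f_equal; lra. }
  assert (Hr0 : 0 < INR r) by (apply lt_0_INR; lia).
  assert (HN : 0 < INR r ^ n) by (apply pow_lt; exact Hr0).
  assert (Htp : 0 < t).
  { assert (0 < 1 / (2 * c * INR r ^ n)); [|lra].
    apply Rdiv_lt_0_compat; [lra| apply Rmult_lt_0_compat; lra]. }
  assert (Hdiv : forall a b, a <= b -> a / (2 * t) <= b / (2 * t)).
  { intros a b Hab. apply Rmult_le_compat_r; [left; apply Rinv_0_lt_compat; lra| exact Hab]. }
  assert (grid : forall k, (k <= r ^ n)%nat -> min_grid f r n t x <= qf f t x (INR k / INR r ^ n)).
  { intros k Hk. unfold min_grid. apply fold_min_le_in. apply in_map_iff.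
    exists k; split; auto. apply in_seq; lia. }
  assert (gridN : INR (r ^ n) / INR r ^ n = 1).
  { rewrite pow_INR. field. lra. }
  assert (lower : forall z, min_grid f r n t x <= qf f t x z).
  { intro z.
    destruct (Rlt_le_dec z 0) as [Hz|Hz].
    { eapply Rle_trans; [apply fold_min_le_d|]. unfold qf. rewrite f0.
      assert (Hfz := Hnn z). assert (((x - 0) ^ 2) / (2 * t) <= (x - z) ^ 2 / (2 * t)).
      { apply Hdiv. nra. }
      lra. }
    destruct (Rlt_le_dec 1 z) as [Hz1|Hz1].
    { eapply Rle_trans; [apply (grid (r ^ n)%nat); lia|]. rewrite gridN. unfold qf. rewrite f1.
      assert (Hfz := Hnn z). assert (((x - 1) ^ 2) / (2 * t) <= (x - z) ^ 2 / (2 * t)).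
      { apply Hdiv. nra. }
      lra. }
    destruct (Req_dec z 1) as [Hz1'|Hz1'].
    { subst z. rewrite <- gridN. apply grid. lia. }
    set (N := INR r ^ n) in *.
    set (w := z * N).
    assert (Hw : 0 <= w < N).
    { unfold w. split; [nra|]. assert (z < 1) by lra. nra. }
    destruct (base_Int_part w) as [B1 B2].
    set (k := Int_part w) in *.
    assert (Hk0 : (0 <= k)%Z).
    { assert (-1 < IZR k) by lra. apply lt_IZR in H. lia. }
    set (K := Z.to_nat k).
    assert (HK : INR K = IZR k) by (unfold K; rewrite INR_IZR_INZ, Z2Nat.id; auto).
    assert (HKlt : (K < r ^ n)%nat).
    { apply INR_lt. rewrite pow_INR. fold N. lra. }
    set (y := w - IZR k).
    destruct (Rle_lt_dec y 0) as [Hy0|Hy0].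
    { replace z with (INR K / N).
      - apply grid; lia.
      - rewrite HK. unfold y, w in *. field_simplify; [|lra]. 
        apply (Rmult_eq_reg_r N); [|lra]. field_simplify; lra. }
    assert (Hy : 0 < y < 1) by (unfold y in *; lra).
    specialize (HP n k y Hy). unfold delta_plus, delta_minus in HP. fold N in HP.
    pose proof (core f N c t x (IZR k) y HN Hc Ht Hy HP) as Hcore.
    replace ((IZR k + y) / N) with z in Hcore by (unfold y, w; field; lra).
    eapply Rle_trans; [|exact Hcore].
    apply Rmin_case.
    - rewrite <- HK. apply grid; lia.
    - replace (IZR k + 1) with (INR (S K)) by (rewrite S_INR; lra). apply grid; lia. }
  apply is_glb_Rbar_unique. split.
  - intros v [z ->]. simpl. apply lower.
  - intros b Hb. apply Hb.
    unfold min_grid.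
    destruct (fold_min_cases (qf f t x 0)
      (map (fun k : nat => qf f t x (INR k / INR r ^ n)) (seq 0 (r ^ n + 1)))) as [E|E].
    + rewrite E. now exists 0.
    + apply in_map_iff in E. destruct E as [k [E _]]. rewrite <- E. now exists (INR k / INR r ^ n).
Qed.
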